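(* Let $\omega\in S_n$ and $1\le i<j\le n$ with $c_i(\omega),c_j(\omega)>0$. If $m_{i,p}(\omega)>m_{j,q}(\omega)$ for some $p\in[c_i(\omega)]$ and $q\in[c_j(\omega)]$, then $c_j(\omega)\ge c_i(\omega)+q-p$.
   Context: Permutations $\omega\in S_n$ are written in one-line notation. Let ${\rm Inv}(\omega)=\{(i,j): 1\le i<j\le n,\ \omega(i)>\omega(j)\}$, $c_i(\omega)=\#\{j: i<j\le n,\ \omega(i)>\omega(j)\}$, and for $i<j$, $c_{i,j}(\omega)=\#\{k: i<k<j,\ \omega(i)>\omega(k)\}$; $[m]=\{1,\dots,m\}$. For $i$ with $c_i(\omega)>0$ and $x\in[c_i(\omega)]$, $m_{i,x}(\omega)\in\mathbb{N}^n$ has $j$-th coordinate $0$ if $j<i$; $x$ if $j=i$; $0$ if $j>i$ and $(i,j)\in{\rm Inv}(\omega)$; $\max\{0,x-c_{i,j}(\omega)\}$ if $j>i$ and $(i,j)\notin{\rm Inv}(\omega)$. Comparisons are strict comparisons in the product order on $\mathbb{N}^n$. *)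

(* Defs.v *)
(* Permutations of S_n are elements of 'S_n (perms of 'I_n);
   positions 1..n of the paper are the ordinals 0..n-1. *)
From mathcomp Require Import all_boot all_order all_fingroup.
Set Implicit Arguments. Unset Strict Implicit. Unset Printing Implicit Defensive.

Definition inv_pair n (w : 'S_n) (i j : 'I_n) : bool := (i < j) && (w j < w i).

Definition cnt n (w : 'S_n) (i : 'I_n) : nat := #|[pred j : 'I_n | inv_pair w i j]|.

Definition cnt2 n (w : 'S_n) (i j : 'I_n) : nat :=
  #|[pred k : 'I_n | (i < k) && (k < j) && (w k < w i)]|.

Definition mvec n (w : 'S_n) (i : 'I_n) (x : nat) (j : 'I_n) : nat :=
  if j < i then 0
  else if j == i then x
  else if inv_pair w i j then 0
  else x - cnt2 w i j.   (* truncated subtraction = max{0, x - c_{i,j}} *)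

Definition vle n (a b : 'I_n -> nat) : Prop := forall k, a k <= b k.
Definition vlt n (a b : 'I_n -> nat) : Prop := vle a b /\ exists k, a k <> b k.

(* Main.v *)
Require Import Defs.
From mathcomp Require Import all_boot all_order all_fingroup.
From mathcomp Require Import zify.

Lemma cnt_split n (w : 'S_n) (i j : 'I_n) :
  i < j -> w i < w j -> cnt w i <= cnt2 w i j + cnt w j.
Proof.
move=> ij wij.
rewrite /cnt /cnt2 -cardUI.
apply: leq_trans (leq_addr _ _).
apply: subset_leq_card; apply/subsetP => k; rewrite !inE /inv_pair.
case/andP=> ik wk.
case: (ltngtP k j) => [kj|jk|/val_inj kj].
- by rewrite ik /= wk.
- apply/orP; right; rewrite /Defs.inv_pair; apply/andP; split; [exact: jk | exact: ltn_trans wk wij].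
- by move: wij wk; rewrite -kj => a b; move: (ltn_trans b a); rewrite ltnn.
Qed.

Theorem mainTheorem5 (n : nat) (w : 'S_n) (i j : 'I_n) (p q : nat) :
  i < j -> 0 < cnt w i -> 0 < cnt w j ->
  1 <= p <= cnt w i -> 1 <= q <= cnt w j ->
  vlt (mvec w j q) (mvec w i p) ->
  cnt w i + q <= cnt w j + p.
Proof.
move=> ij _ _ /andP[p1 pc] /andP[q1 qc] [H _].
have := H j; rewrite /mvec ltnn eqxx.
have -> : (j < i) = false by apply/negbTE; rewrite -leqNgt ltnW.
have -> : (j == i) = false by apply/negbTE; rewrite neq_ltn ij orbT.
case: (boolP (Defs.inv_pair w i j)) => [_|].
  by rewrite leqn0 => /eqP E; move: q1; rewrite E.
rewrite /Defs.inv_pair ij /=.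
case: ltngtP => [wji|wij|/val_inj/perm_inj e] // _ Hq.
- have := @cnt_split n w i j ij wij; lia.
- by move: ij; rewrite e ltnn.
Qed.
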